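(* Let $\mathcal{S}$ be a finite set with $N_{\mathcal{S}} = |\mathcal{S}| \ge 2$ elements, and let $\mathcal{X}$ be an input space with a probability distribution $p$, where every $x \in \mathcal{X}$ has a unique correct output $s_x \in \mathcal{S}$ and $\mathcal{X} = \mathcal{X}^{\text{in}} \cup \mathcal{X}^{\text{out}}$ is a disjoint union. Consider an EnSolver $m$ built from $M$ base models $m_1,\dots,m_M$ with uncertainty threshold $\tau \in (0,1]$ such that $M(1-\tau)$ is a positive integer, satisfying the standing assumptions (independence and (A1)–(A3)) described in the context. Then $$\mathcal{E}(M, N_{\mathcal{S}}, \tau) > p\left( m(x) \notin \{ s_x, s_{\text{skip}} \} \,\middle|\, x \in \mathcal{X}^{\text{out}} \right).$$
   Context: Setting: $\mathcal{S}$ is a finite set of output strings with $N_{\mathcal{S}} = |\mathcal{S}| \ge 2$; inputs $x \in \mathcal{X}$ are drawn from a probability distribution $p$ on $\mathcal{X}$, each $x$ having a single correct output $s_x \in \mathcal{S}$. $\mathcal{X}$ is the disjoint union of the in-distribution set $\mathcal{X}^{\text{in}}$ and the out-of-distribution set $\mathcal{X}^{\text{out}}$, and $\alpha = p(x \in \mathcal{X}^{\text{in}})$. An ensemble consists of $M$ base models $m_1, \dots, m_M$, each of which produces a (random) prediction $m_i(x) \in \mathcal{S}$ on input $x$; probabilities are taken jointly over $x \sim p$ and the predictions, and the base models make their predictions independently of each other given the input (in particular conditionally on $x \in \mathcal{X}^{\text{in}}$ and conditionally on $x \in \mathcal{X}^{\text{out}}$). Let $\beta_i = p(m_i(x) =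 s_x \mid x \in \mathcal{X}^{\text{in}})$, $\beta_{\text{min}} = \min_i \beta_i$, $\beta_{\text{max}} = \max_i \beta_i$. Assumptions: (A1) $\beta_{\text{min}} > 1/N_{\mathcal{S}}$; (A2) for each $i$, conditionally on $x \in \mathcal{X}^{\text{in}}$, $m_i(x)$ equals each incorrect string $s \neq s_x$ with probability $(1-\beta_i)/(N_{\mathcal{S}}-1)$; (A3) for each $i$, conditionally on $x \in \mathcal{X}^{\text{out}}$, $m_i(x)$ equals each $s \in \mathcal{S}$ with probability $1/N_{\mathcal{S}}$. For $x$ and $s \in \mathcal{S}$, $n(x,s)$ is the number of base models with $m_i(x) = s$. The threshold $\tau \in (0,1]$ is such that $M(1-\tau)$ is a positive integer. The EnSolver $m$ acts as follows on input $x$: let $p_{\max} = \max_{s} n(x,s)/M$ and uncertainty $u = 1 - p_{\max}$; if $u < \tau$ it outputs a string $y$ maximizing $n(x,\cdot)$, otherwise it outputs a special skip symbol $s_{\text{skip}}$. The out-of-distribution error bound is $\mathcal{E}(M, N_{\mathcal{S}}, \tau) = \binom{M}{\lfloor M/2 \rfloor} (N_{\mathcal{S}})^{-M(1-\tau)}$. *)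

(* Defs.v *)
From HB Require Import structures.
From mathcomp Require Import all_boot all_order all_algebra.
From mathcomp Require Import all_classical all_reals all_analysis.

Set Implicit Arguments.
Unset Strict Implicit.
Unset Printing Implicit Defensive.

Import Order.TTheory GRing.Theory Num.Theory.
Local Open Scope classical_set_scope.
Local Open Scope ring_scope.

Definition condp d (T : measurableType d) (R : realType) (P : probability T R)
  (A B : set T) : R := fine (P (A `&` B)) / fine (P B).

Definition nvotes (S : finType) (M : nat) (preds : 'I_M -> S) (s : S) : nat :=
  #|[set i : 'I_M | preds i == s]|.

Definition maxvotes (S : finType) (M : nat) (preds : 'I_M -> S) : nat :=
  \max_(s : S) nvotes preds s.

(* The EnSolver: p_max = max_s n(x,s)/M, u = 1 - p_max; if u < tau output y
   (the selected string y, which must maximise n(x,.)), else skip.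
   The skip symbol s_skip is represented by None. *)
Definition ensolver (R : realType) (S : finType) (M : nat) (tau : R)
  (preds : 'I_M -> S) (y : S) : option S :=
  let pmax : R := (maxvotes preds)%:R / M%:R in
  if 1 - pmax < tau then Some y else None.

Definition ood_bound (R : realType) (M N : nat) (tau : R) : R :=
  'C(M, M./2)%:R * (N%:R) `^ (- (M%:R * (1 - tau))).

(* Main.v *)
Require Import Defs.
From HB Require Import structures.
From mathcomp Require Import all_boot all_order all_algebra.
From mathcomp Require Import all_classical all_reals all_analysis.
From mathcomp Require Import zify ring lra.
Import Order.TTheory GRing.Theory Num.Theory.
Local Open Scope classical_set_scope.
Local Open Scope ring_scope.


Section Comb.
Local Close Scope classical_set_scope.
Local Close Scope ring_scope.
Local Open Scope nat_scope.
Local Set Implicit Arguments. Local Unset Strict Implicit.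

Lemma bin_inc n m : m.*2 < n -> 'C(n,m) <= 'C(n,m.+1).
Proof.
move=> h; rewrite -(@leq_pmul2l m.+1) // mul_bin_left.
apply: leq_mul => //; rewrite -addnn in h; lia.
Qed.

Lemma bin_dec n m : n <= m.*2.+1 -> 'C(n,m.+1) <= 'C(n,m).
Proof.
move=> h; rewrite -(@leq_pmul2l m.+1) // mul_bin_left.
apply: leq_mul => //; rewrite -addnn in h; lia.
Qed.

Lemma bin_le_mid n m : 'C(n,m) <= 'C(n,n./2).
Proof.
have hn := odd_double_half n. have ho : (odd n <= 1) by case: (odd n).
rewrite -addnn in hn.
have [le|lt] := leqP m n./2.
  move: (n./2 - m) (subnKC le) => dd.
  elim: dd m {le} => [|dd IH] m hm; first by rewrite -hm addn0.
  apply: leq_trans (bin_inc _) _; first by rewrite -addnn; lia.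
  by apply: IH; rewrite -hm addnS.
move: (m - n./2) (subnKC (ltnW lt)) => dd.
elim: dd m {lt} => [|dd IH] m hm; first by rewrite -hm addn0.
rewrite -hm addnS; apply: leq_trans (bin_dec _) _; first by rewrite -addnn; lia.
by apply: IH.
Qed.

Lemma bin_mid_ge2 n : 2 <= n -> 2 <= 'C(n, n./2).
Proof. move=> h; apply: leq_trans (bin_le_mid n 1); by rewrite bin1. Qed.

Variables (S : finType) (M : nat).
Local Notation N := #|S|.
Definition nv (f : {ffun 'I_M -> S}) (s : S) := #|[set i | f i == s]|.

Lemma card_fix (s : S) (T : {set 'I_M}) :
  #|[set f : {ffun 'I_M -> S} | T \subset [set i | f i == s]]| = N ^ (M - #|T|).
Proof.
pose A i : {set S} := if i \in T then [set s] else [set: S]%SET.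
transitivity #|setXn A|.
  apply: eq_card => f; rewrite !inE; apply/fintype.subsetP/forallP => [h i|h i iT].
    rewrite /finfun.fmem /A; case: ifP => iT; last by rewrite inE.
    by have := h i iT; rewrite !inE.
  by have := h i; rewrite /finfun.fmem /A iT !inE.
rewrite cardsXn (eq_bigr (fun i => if i \in ~: T then N else 1)); last first.
  by move=> i _; rewrite /A inE; case: ifP => _; rewrite ?cards1 ?cardsT.
rewrite -big_mkcond /= prod_nat_const; congr (_ ^ _); have := cardsC T; rewrite card_ord => h; exact: (canRL (addKn #|T|) h).
Qed.

Lemma dcount s k :
  \sum_(T : {set 'I_M} | #|T| == k)
     #|[set f : {ffun 'I_M -> S} | T \subset [set i | f i == s]]|
  = \sum_(f : {ffun 'I_M -> S}) 'C(nv f s, k).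
Proof.
transitivity (\sum_(T : {set 'I_M} | #|T| == k)
   \sum_(f : {ffun 'I_M -> S} | T \subset [set i | f i == s]) 1).
  by apply: eq_bigr => T _; rewrite -sum1_card; apply: eq_bigl => f; rewrite inE.
rewrite (exchange_big_dep xpredT) //=; apply: eq_bigr => f _.
rewrite /nv -(cards_draws _ k) -sum1_card; apply: eq_bigl => T; by rewrite !inE andbC.
Qed.

Lemma nv_const s : nv [ffun=> s] s = M.
Proof.
rewrite /nv -[RHS](card_ord M); apply: eq_card => i; rewrite !inE ffunE eqxx.
by [].
Qed.

Lemma key s k : 0 < k -> k <= M ->
  #|[set f : {ffun 'I_M -> S} | k <= nv f s]| + ('C(M,k) - 1)
    <= 'C(M,k) * N ^ (M - k).
Proof.
move=> k0 kM.
have E1 : \sum_(T : {set 'I_M} | #|T| == k)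
     #|[set f : {ffun 'I_M -> S} | T \subset [set i | f i == s]]|
   = 'C(M,k) * N ^ (M - k).
  rewrite (eq_bigr (fun _ => N ^ (M - k))) => [|T /eqP <-]; last exact: card_fix.
  rewrite big_const iter_addn_0 mulnC; congr (_ * _); rewrite -[in RHS](card_ord M) -card_draws; by apply: eq_card => T; rewrite inE.
rewrite -E1 dcount (bigID (fun f => k <= nv f s)) /=.
apply: leq_trans (leq_addr _ _).
rewrite (eq_bigr (fun f => 1 + ('C(nv f s, k) - 1))); last first.
  by move=> f hf; rewrite subnKC // bin_gt0.
rewrite big_split /= sum1_card.
have -> : #|[set f : {ffun 'I_M -> S} | k <= nv f s]| = #|[pred f : {ffun 'I_M -> S} | k <= nv f s]|.
  by apply: eq_card => f; rewrite !inE.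
rewrite leq_add2l (bigD1 [ffun=> s]) /=; last by rewrite nv_const.
by rewrite nv_const leq_addr.
Qed.

Lemma nv_le f s : nv f s <= M.
Proof. by rewrite /nv -[X in _ <= X](card_ord M) max_card. Qed.

Lemma sum_bool_card (P : pred {ffun 'I_M -> S}) :
  \sum_(f : {ffun 'I_M -> S}) (P f : nat) = #|[set f | P f]|.
Proof.
rewrite -sum1_card [in RHS]big_mkcond /=; apply: eq_bigr => f _; rewrite inE.
by case: (P f).
Qed.

Lemma arith X C Cm a b N' :
  X <= N' * (C * a - (C - 1)) -> C <= Cm -> 2 <= Cm -> 1 <= C -> 1 <= a -> 1 <= b ->
  X * b < Cm * (a * N' * b) \/ N' = 0.
Proof.
move=> hX hC hCm h1 ha hb.
case: (posnP N') => [->|hN]; first by right.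
left.
have hY : C * a - (C - 1) <= C * a by apply: leq_subr.
have [c1|c2] := leqP C 1.
  have C1 : C = 1 by apply/eqP; rewrite eqn_leq c1 h1.
  rewrite C1 mul1n subnn subn0 in hX.
  apply: (leq_ltn_trans (leq_mul hX (leqnn b))).
  have hp : 0 < a * N' * b by rewrite !muln_gt0 ha hN hb.
  rewrite [N' * a]mulnC -[X in X < _]mul1n ltn_mul2r hp.
  by apply: leq_trans hCm.
have hY' : C * a - (C - 1) < C * a.
  have : C <= C * a by rewrite leq_pmulr.
  lia.
apply: (leq_ltn_trans (leq_mul hX (leqnn b))).
rewrite -mulnA [a * N']mulnC -mulnA mulnA [Cm * _]mulnC.
have hh : N' * (C * a - (C - 1)) * b < N' * (C * a) * b.
  by rewrite ltn_mul2r hb ltn_mul2l hN.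
apply: (leq_trans hh).
have -> : N' * (C * a) * b = N' * (a * b) * C.
  by nia.
by rewrite leq_mul2l hC orbT.
Qed.


Lemma total K : 0 < K -> 2 <= N ->
  #|[set f : {ffun 'I_M -> S} | [exists s, K < nv f s]]| * N ^ K
    < 'C(M, M./2) * N ^ M.
Proof.
move=> K0 N2.
have N0 : 0 < N by apply: leq_trans N2.
have NM : 0 < N ^ M by rewrite expn_gt0 N0.
have Cm0 : 0 < 'C(M, M./2).
  rewrite bin_gt0; have hn := odd_double_half M; rewrite -addnn in hn; lia.
case: (leqP M K) => hKM.
  have -> : #|[set f : {ffun 'I_M -> S} | [exists s, K < nv f s]]| = 0.
    apply: eq_card0 => f; rewrite inE; apply/existsP => -[s hs].
    by have := nv_le f s; lia.
  by rewrite mul0n muln_gt0 Cm0 NM.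
have hsum : #|[set f : {ffun 'I_M -> S} | [exists s, K < nv f s]]|
    <= \sum_(s : S) #|[set f : {ffun 'I_M -> S} | K.+1 <= nv f s]|.
  rewrite -sum_bool_card.
  rewrite (eq_bigr _ (fun s _ => esym (sum_bool_card (fun f => K.+1 <= nv f s)))).
  rewrite exchange_big /=; apply: leq_sum => f _.
  case: existsP => [[s hs]|_] //.
  by rewrite (bigD1 s) //= hs.
set C := 'C(M, K.+1).
set a := N ^ (M - K.+1).
have hA : forall s, #|[set f : {ffun 'I_M -> S} | K.+1 <= nv f s]| <= C * a - (C - 1).
  move=> s; have := key s (ltn0Sn K) hKM; rewrite -/C -/a; lia.
have hsum2 : \sum_(s : S) #|[set f : {ffun 'I_M -> S} | K.+1 <= nv f s]|
    <= N * (C * a - (C - 1)).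
  apply: leq_trans; first by apply: leq_sum => s _; exact: hA s.
  by rewrite big_const iter_addn_0 mulnC.
have M2 : 2 <= M by lia.
have C1 : 1 <= C by rewrite bin_gt0.
have a1 : 1 <= a by rewrite expn_gt0 N0.
have b1 : 1 <= N ^ K by rewrite expn_gt0 N0.
case: (arith (leq_trans hsum hsum2) (bin_le_mid M K.+1) (bin_mid_ge2 M2) C1 a1 b1)
  => [h|h]; last by rewrite h in N0.
rewrite (_ : N ^ M = a * N * N ^ K) //.
by rewrite /a -expnSr -expnD; congr (_ ^ _); lia.
Qed.
End Comb.


Section Meas.
Local Set Implicit Arguments. Local Unset Strict Implicit.
Variables (R : realType) (d : measure_display) (Omega : measurableType d)
  (P : probability Omega R).

Lemma fin_pre (T' : finType) (h : Omega -> T') (Q : T' -> Prop) :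
  (forall t, measurable [set w | h w = t]) -> measurable [set w | Q (h w)].
Proof.
move=> mh.
have -> : [set w | Q (h w)] = \bigcup_(t in [set t | Q t]) [set w | h w = t].
  apply/seteqP; split => w /=; first by move=> q; exists (h w).
  by move=> [t qt ->].
apply: fin_bigcup_measurable => //; exact: finite_finset.
Qed.

Lemma subadd (I : Type) (r : seq I) (F : I -> set Omega) :
  (forall i, measurable (F i)) ->
  (P (\big[setU/set0]_(i <- r) F i) <= \sum_(i <- r) P (F i))%E.
Proof.
move=> mF; elim: r => [|i r IH]; first by rewrite !big_nil measure0.
rewrite !big_cons; apply: le_trans (measureU2 _ (mF i) _) _.
  exact: bigsetU_measurable.
by apply: leeD2l.
Qed.
End Meas.

Theorem lemma1
  (R : realType) (d : measure_display) (Omega : measurableType d)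
  (P : probability Omega R)
  (S : finType) (X : Type) (Xin : set X) (correct : X -> S)
  (x : Omega -> X) (M : nat) (preds : 'I_M -> Omega -> S)
  (sel : Omega -> S) (tau : R) (K : nat)
  (* N_S >= 2 *)
  (hN : (2 <= #|S|)%N)
  (* tau in (0,1], M(1 - tau) = K a positive integer *)
  (htau0 : 0 < tau) (htau1 : tau <= 1)
  (hK : (0 < K)%N) (hMK : M%:R * (1 - tau) = K%:R)
  (* measurability of the relevant events *)
  (mXin : measurable [set w | Xin (x w)])
  (mcorr : forall s : S, measurable [set w | correct (x w) = s])
  (mpred : forall (i : 'I_M) (s : S), measurable [set w | preds i w = s])
  (msel : forall s : S, measurable [set w | sel w = s])
  (* both parts of X have positive probability (so the conditionals exist) *)
  (hin_pos : (0 < P [set w | Xin (x w)])%E)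
  (hout_pos : (0 < P [set w | ~ Xin (x w)])%E)
  (* the EnSolver outputs a string maximizing n(x, .) *)
  (hsel : forall (w : Omega) (s : S),
      (nvotes (fun i => preds i w) s <= nvotes (fun i => preds i w) (sel w))%N)
  (* independence of the base models conditionally on X^in and on X^out *)
  (hind_in : forall f : {ffun 'I_M -> S},
      condp P (\bigcap_(i in [set: 'I_M]) [set w | preds i w = f i])
              [set w | Xin (x w)]
      = \prod_(i < M) condp P [set w | preds i w = f i] [set w | Xin (x w)])
  (hind_out : forall f : {ffun 'I_M -> S},
      condp P (\bigcap_(i in [set: 'I_M]) [set w | preds i w = f i])
              [set w | ~ Xin (x w)]
      = \prod_(i < M) condp P [set w | preds i w = f i] [set w | ~ Xin (x w)])
  (* (A1) *)
  (hA1 : forall i : 'I_M,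
      condp P [set w | preds i w = correct (x w)] [set w | Xin (x w)]
      > 1 / (#|S|)%:R)
  (* (A2): conditionally on X^in and on s being incorrect, m_i(x) = s with
     probability (1 - beta_i) / (N_S - 1) *)
  (hA2 : forall (i : 'I_M) (s : S),
      condp P [set w | preds i w = s /\ correct (x w) <> s] [set w | Xin (x w)]
      = condp P [set w | correct (x w) <> s] [set w | Xin (x w)]
        * ((1 - condp P [set w | preds i w = correct (x w)] [set w | Xin (x w)])
           / ((#|S|)%:R - 1)))
  (* (A3) *)
  (hA3 : forall (i : 'I_M) (s : S),
      condp P [set w | preds i w = s] [set w | ~ Xin (x w)] = 1 / (#|S|)%:R) :
  ood_bound M #|S| tau >
  condp P
    [set w | ensolver tau (fun i => preds i w) (sel w) <> Some (correct (x w)) /\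
             ensolver tau (fun i => preds i w) (sel w) <> None]
    [set w | ~ Xin (x w)].

Proof.
have N0 : (0 < #|S|)%N by apply: leq_trans hN.
have NR : (0 : R) < (#|S|)%:R by rewrite ltr0n.
set out := [set w | ~ Xin (x w)].
have mout : measurable out by exact: (measurableC mXin).
have finP : forall A, measurable A -> P A = (fine (P A))%:E.
  by move=> A mA; rewrite fineK // fin_num_measure.
have po0 : 0 < fine (P out).
  apply: fine_gt0; rewrite hout_pos /=.
  by apply: (le_lt_trans (probability_le1 P mout)); rewrite ltry.
pose cyl (f : {ffun 'I_M -> S}) :=
  \bigcap_(i in [set: 'I_M]) [set w | preds i w = f i].
have mcyl : forall f, measurable (cyl f).
  move=> f; apply: fin_bigcap_measurable; first exact: finite_finset.
  by move=> i _; exact: mpred.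
have hcyl : forall f, fine (P (cyl f `&` out)) = ((#|S|)%:R^-1)^+M * fine (P out).
  move=> f; have := hind_out f.
  rewrite (eq_bigr (fun=> (#|S|)%:R^-1)); last by move=> i _; rewrite hA3 div1r.
  rewrite prodr_const card_ord /condp => h; rewrite -h mulfVK //; exact: lt0r_neq0.
have M0 : (0 < M)%N.
  case: (posnP M) => // M0; move: hMK; rewrite M0 mul0r => /esym/eqP.
  by rewrite pnatr_eq0 => /eqP K0; rewrite K0 in hK.
set E := [set w | ensolver tau (fun i => preds i w) (sel w) <> Some (correct (x w)) /\
             ensolver tau (fun i => preds i w) (sel w) <> None].
have mE : measurable E.
  pose h w := ([ffun i => preds i w], sel w, correct (x w)).
  pose Q (t : {ffun 'I_M -> S} * S * S) :=
    ensolver tau (fun i => t.1.1 i) t.1.2 <> Some t.2 /\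
    ensolver tau (fun i => t.1.1 i) t.1.2 <> None.
  have eqf : forall w, (fun i => [ffun i0 => preds i0 w] i) = (fun i => preds i w).
    by move=> w; apply: funext => i; rewrite ffunE.
  have -> : E = [set w | Q (h w)].
    by apply/seteqP; split => w /=; rewrite /Q /h /= eqf.
  apply: fin_pre => -[[f s1] s2].
  have -> : [set w | h w = (f, s1, s2)] =
      cyl f `&` [set w | sel w = s1] `&` [set w | correct (x w) = s2].
    apply/seteqP; split => w /=.
      rewrite /h => -[<- <- <-]; split => //; split => // i _ /=; by rewrite ffunE.
    move=> [[hc hs] hcr]; rewrite /h hs hcr; congr (_, _, _).
    by apply/ffunP => i; rewrite ffunE; exact: hc i I.
  apply: measurableI; first apply: measurableI.
  - exact: mcyl.
  - exact: msel.
  - exact: mcorr.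
pose Fset := [set f : {ffun 'I_M -> S} | [exists s, (K < nv f s)%N]]%SET.
have hinc : E `&` out `<=` \big[setU/set0]_(f <- enum Fset) (cyl f `&` out).
  move=> w [[h1 h2] hw]; rewrite -bigcup_seq.
  exists [ffun i => preds i w]; last by split => // i _ /=; rewrite ffunE.
  rewrite /= mem_enum inE; apply/existsP; exists (sel w).
  have -> : nv [ffun i => preds i w] (sel w) = nvotes (fun i => preds i w) (sel w).
    by rewrite /nv /nvotes; apply: eq_card => i; rewrite !inE ffunE; apply/idP/idP; rewrite in_setE.
  have hm : (maxvotes (fun i => preds i w) <= nvotes (fun i => preds i w) (sel w))%N.
    by apply/bigmax_leqP => s _; exact: hsel.
  apply: (leq_trans _ hm).
  move: h2; rewrite /ensolver; case: ifP => // hlt _.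
  rewrite -(ltr_nat R) -hMK.
  have Mp : (0 : R) < M%:R by rewrite ltr0n.
  have h3 : 1 - tau < (maxvotes (fun i => preds i w))%:R / M%:R by lra.
  by rewrite mulrC -ltr_pdivlMr.
set c := ((#|S|)%:R^-1)^+M : R.
have mEo : measurable (E `&` out) by exact: measurableI.
have hle : (P (E `&` out) <= ((c * fine (P out)) *+ #|Fset|)%:E)%E.
  apply: le_trans (le_measure _ _ _ hinc) _.
  - by rewrite inE.
  - rewrite inE; apply: bigsetU_measurable => f _; exact: measurableI.
  apply: le_trans (subadd P _ _) _; first by move=> f; exact: measurableI.
  rewrite (eq_bigr (fun f => (c * fine (P out))%:E)); last first.
    by move=> f _; rewrite finP ?hcyl //; exact: measurableI.
  by rewrite sumEFin big_enum sumr_const.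
rewrite (finP _ mEo) lee_fin in hle.
have hc : condp P E out <= (#|Fset|)%:R * c.
  rewrite /condp ler_pdivrMr //; apply: le_trans hle _.
  by rewrite -mulr_natl mulrA.
apply: le_lt_trans hc _.
rewrite /ood_bound hMK powR_invn ?ler0n //.
have ht := @total S M K hK hN.
move: ht; rewrite -(ltr_nat R) !natrM !natrX => ht.
rewrite /c exprVn.
have NM : (0 : R) < (#|S|)%:R ^+ M by rewrite exprn_gt0.
have NK : (0 : R) < (#|S|)%:R ^+ K by rewrite exprn_gt0.
rewrite -(ltr_pM2r (mulr_gt0 NM NK)).
have e1 : (#|Fset|)%:R * ((#|S|)%:R ^+ M)^-1 * ((#|S|)%:R ^+ M * (#|S|)%:R ^+ K)
    = (#|Fset|)%:R * (#|S|)%:R ^+ K :> R.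
  by rewrite mulrA mulfVK // lt0r_neq0.
have e2 : ('C(M, M./2))%:R * ((#|S|)%:R ^+ K)^-1 * ((#|S|)%:R ^+ M * (#|S|)%:R ^+ K)
    = ('C(M, M./2))%:R * (#|S|)%:R ^+ M :> R.
  by rewrite [X in _ * X]mulrC mulrA mulfVK // lt0r_neq0.
by rewrite e1 e2.
Qed.
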